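(* If the joint state space is the minimal tensor product, $\Omega_{AB}=\Omega_A\otimes_{\min}\Omega_B$, then for any set of allowed local transformations on $A$ one has $\chi_{DC}(\Omega_{AB})\le\chi_C(\Omega_A)$; i.e. superdense coding (a state $\phi$ with $\chi_{DC}(\phi)>\chi_C(\Omega_A)$) is impossible.
   Context: Single systems: $\Omega_A\subset\mathbb R^{n_A+1}$, $\Omega_B\subset\mathbb R^{n_B+1}$ are GPT state spaces of the form $\{(1,r)^{\mathrm t}: r\in\mathcal R\}$ with $\mathcal R$ compact convex, unit effects $u_A,u_B=(1,\mathbf 0)^{\mathrm t}$, effect sets $\mathcal E_A=\{e:0\le e\cdot\omega\le1\ \forall\omega\in\Omega_A\}$ (similarly $\mathcal E_B$). Bipartite states are real $(n_A+1)\times(n_B+1)$ matrices, identified with $\mathbb R^{n_A+1}\otimes\mathbb R^{n_B+1}$ via $v\otimes w=vw^{\mathrm t}$, inner product $X\cdot Y=\mathrm{Tr}(X^{\mathrm t}Y)$. $\Omega_A\otimes_{\min}\Omega_B$ is the convex hull of $\{\omega_A\otimes\omega_B:\omega_A\in\Omega_A,\omega_B\in\Omega_B\}$. Effects of a joint state space $\Omega_{AB}$: $\mathcal E_{AB}=\{E:0\le E\cdot\phi\le1\ \forall\phi\in\Omega_{AB}\}$; measurements are finite families in $\mathcal E_{AB}$ summing to $u_A\otimes u_B$. An allowed local transformation on $A$ is a linear map $T$ of $\mathbb R^{n_A+1}$ with $T\Omega_A\subseteq\Omega_A$ and $T\phi\in\Omega_{AB}$ for all $\phi\in\Omega_{AB}$.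 Classical capacity $\chi_C(\Omega_A)$: supremum of $I(X:Y)$ over finite message distributions $p_x$, states $\omega_x\in\Omega_A$ and measurements $\{e_y\}\subset\mathcal E_A$ with $p(y|x)=e_y\cdot\omega_x$. A dense coding protocol with initial state $\phi\in\Omega_{AB}$ consists of a finite message distribution $p_x$, allowed local transformations $T_x$ on $A$, and a measurement $\{E_y\}\subset\mathcal E_{AB}$, with $p(y|x)=E_y\cdot(T_x\phi)$; $\chi_{DC}(\phi)$ is the supremum of $I(X:Y)$ over such protocols and $\chi_{DC}(\Omega_{AB})=\sup_\phi\chi_{DC}(\phi)$. *)

(* Defs.v *)
From Stdlib Require Import Reals.
Open Scope R_scope.

(* Vectors of R^{n+1} are represented as functions nat -> R vanishing at indices > n
   (coordinates 0..n); real (n_A+1)x(n_B+1) matrices as nat -> nat -> R vanishing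
   outside the index box. *)
Definition vec := nat -> R.
Definition mat := nat -> nat -> R.

Fixpoint rsum (m : nat) (f : nat -> R) : R :=
  match m with
  | O => 0
  | S k => rsum k f + f k
  end.

Definition supp1 (n : nat) (v : vec) : Prop := forall i, (n < i)%nat -> v i = 0.
Definition supp2 (nA nB : nat) (X : mat) : Prop :=
  forall i j, (nA < i)%nat \/ (nB < j)%nat -> X i j = 0.

Definition dot (n : nat) (v w : vec) : R := rsum (S n) (fun i => v i * w i).
Definition dot2 (nA nB : nat) (X Y : mat) : R :=
  rsum (S nA) (fun i => rsum (S nB) (fun j => X i j * Y i j)).

Definition tensor (v w : vec) : mat := fun i j => v i * w j.

Definition unit_eff : vec := fun i => match i with O => 1 | _ => 0 end.

Definition cons1 (r : vec) : vec := fun i => match i with O => 1 | S k => r k end.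

(* compact convex subsets of R^n (compact = closed and bounded, Heine-Borel) *)
Definition convex_set (n : nat) (S : vec -> Prop) : Prop :=
  forall r s t, S r -> S s -> 0 <= t <= 1 -> S (fun i => t * r i + (1 - t) * s i).
Definition bounded_set (n : nat) (S : vec -> Prop) : Prop :=
  exists M, forall r i, S r -> (i < n)%nat -> Rabs (r i) <= M.
Definition closed_set (n : nat) (S : vec -> Prop) : Prop :=
  forall (u : nat -> vec) (r : vec),
    (forall k, S (u k)) -> (forall i, (n <= i)%nat -> r i = 0) ->
    (forall i, (i < n)%nat -> Un_cv (fun k => u k i) (r i)) -> S r.
Definition in_Rn (n : nat) (r : vec) : Prop := forall i, (n <= i)%nat -> r i = 0.

Definition gpt_state_space (n : nat) (Om : vec -> Prop) : Prop :=
  exists Rset : vec -> Prop,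
    (forall r, Rset r -> in_Rn n r) /\
    convex_set n Rset /\ bounded_set n Rset /\ closed_set n Rset /\
    (forall w, Om w <-> exists r, Rset r /\ w = cons1 r).

Definition effect (n : nat) (Om : vec -> Prop) (e : vec) : Prop :=
  supp1 n e /\ forall w, Om w -> 0 <= dot n e w <= 1.

Definition min_tensor (OmA OmB : vec -> Prop) (phi : mat) : Prop :=
  exists (m : nat) (lam : nat -> R) (a b : nat -> vec),
    (forall k, (k < m)%nat -> 0 <= lam k /\ OmA (a k) /\ OmB (b k)) /\
    rsum m lam = 1 /\
    phi = (fun i j => rsum m (fun k => lam k * a k i * b k j)).

Definition joint_effect (nA nB : nat) (OmAB : mat -> Prop) (E : mat) : Prop :=
  supp2 nA nB E /\ forall phi, OmAB phi -> 0 <= dot2 nA nB E phi <= 1.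

Definition apply1 (nA : nat) (T : mat) (v : vec) : vec :=
  fun i => rsum (S nA) (fun k => T i k * v k).
Definition applyA (nA : nat) (T : mat) (phi : mat) : mat :=
  fun i j => rsum (S nA) (fun k => T i k * phi k j).

Definition allowed_local (nA nB : nat) (OmA : vec -> Prop) (OmAB : mat -> Prop) (T : mat) : Prop :=
  supp2 nA nA T /\
  (forall w, OmA w -> OmA (apply1 nA T w)) /\
  (forall phi, OmAB phi -> OmAB (applyA nA T phi)).

Definition prob_dist (m : nat) (p : nat -> R) : Prop :=
  (forall x, (x < m)%nat -> 0 <= p x) /\ rsum m p = 1.

Definition log2 (x : R) : R := ln x / ln 2.

(* mutual information I(X:Y) for p(x) and channel p(y|x) = q x y,
   x < m, y < k, with the convention 0 log 0 = 0 *)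
Definition mutual_info (m k : nat) (p : nat -> R) (q : nat -> nat -> R) : R :=
  rsum m (fun x => rsum k (fun y =>
    let pxy := p x * q x y in
    let py := rsum m (fun x' => p x' * q x' y) in
    if Req_EM_T pxy 0 then 0 else pxy * log2 (q x y / py))).

Definition classical_values (nA : nat) (OmA : vec -> Prop) (v : R) : Prop :=
  exists (m : nat) (p : nat -> R) (om : nat -> vec) (k : nat) (e : nat -> vec),
    prob_dist m p /\
    (forall x, (x < m)%nat -> OmA (om x)) /\
    (forall y, (y < k)%nat -> effect nA OmA (e y)) /\
    (forall i, rsum k (fun y => e y i) = unit_eff i) /\
    v = mutual_info m k p (fun x y => dot nA (e y) (om x)).

Definition dc_values_state (nA nB : nat) (OmA : vec -> Prop) (OmAB : mat -> Prop)
    (Tset : mat -> Prop) (phi : mat) (v : R) : Prop :=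
  exists (m : nat) (p : nat -> R) (T : nat -> mat) (k : nat) (E : nat -> mat),
    prob_dist m p /\
    (forall x, (x < m)%nat -> Tset (T x) /\ allowed_local nA nB OmA OmAB (T x)) /\
    (forall y, (y < k)%nat -> joint_effect nA nB OmAB (E y)) /\
    (forall i j, rsum k (fun y => E y i j) = tensor unit_eff unit_eff i j) /\
    v = mutual_info m k p (fun x y => dot2 nA nB (E y) (applyA nA (T x) phi)).

(* values for some initial state phi in OmAB : sup of these is chi_DC(OmAB) *)
Definition dc_values (nA nB : nat) (OmA : vec -> Prop) (OmAB : mat -> Prop)
    (Tset : mat -> Prop) (v : R) : Prop :=
  exists phi, OmAB phi /\ dc_values_state nA nB OmA OmAB Tset phi v.

(* Main.v *)
Require Import Defs.
From Stdlib Require Import Reals Lra Lia Psatz Classical FunctionalExtensionality.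
Open Scope R_scope.

Lemma rsum_ext n f g : (forall i, (i < n)%nat -> f i = g i) -> rsum n f = rsum n g.
Proof. induction n; simpl; intros H; auto. rewrite IHn by (intros; apply H; lia). rewrite H by lia; auto. Qed.

Lemma rsum_le n f g : (forall i, (i < n)%nat -> f i <= g i) -> rsum n f <= rsum n g.
Proof. induction n; simpl; intros H. lra. assert (H1 := H n ltac:(lia)). assert (rsum n f <= rsum n g) by (apply IHn; intros; apply H; lia). lra. Qed.

Lemma rsum_nonneg n f : (forall i, (i < n)%nat -> 0 <= f i) -> 0 <= rsum n f.
Proof. induction n; simpl; intros H. lra. assert (H1 := H n ltac:(lia)). assert (0 <= rsum n f) by (apply IHn; intros; apply H; lia). lra. Qed.

Lemma rsum_ge_term n f k : (forall i, (i < n)%nat -> 0 <= f i) -> (k < n)%nat -> f k <= rsum n f.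
Proof. induction n; simpl; intros H Hk. lia.
  assert (0 <= rsum n f) by (apply rsum_nonneg; intros; apply H; lia).
  destruct (Nat.eq_dec k n). subst. lra.
  assert (f k <= rsum n f) by (apply IHn; [intros; apply H; lia | lia]).
  assert (H2 := H n ltac:(lia)). lra. Qed.

Lemma rsum_pos_ex n f : 0 < rsum n f -> exists k, (k < n)%nat /\ 0 < f k.
Proof. induction n; simpl; intros H. lra.
  destruct (Rlt_dec 0 (f n)). exists n; split; auto.
  destruct IHn as [k [Hk Hf]]. lra. exists k; split; auto. Qed.

Lemma rsum_scal_l n c f : c * rsum n f = rsum n (fun i => c * f i).
Proof. induction n; simpl. ring. rewrite <- IHn. ring. Qed.
Lemma rsum_scal_r n c f : rsum n f * c = rsum n (fun i => f i * c).
Proof. induction n; simpl. ring. rewrite <- IHn. ring. Qed.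
Lemma rsum_plus n f g : rsum n (fun i => f i + g i) = rsum n f + rsum n g.
Proof. induction n; simpl. ring. rewrite IHn. ring. Qed.
Lemma rsum_zero n : rsum n (fun _ => 0) = 0.
Proof. induction n; simpl; auto. rewrite IHn; ring. Qed.
Lemma rsum_swap n m (f : nat -> nat -> R) :
  rsum n (fun i => rsum m (fun j => f i j)) = rsum m (fun j => rsum n (fun i => f i j)).
Proof. induction n; simpl. symmetry; apply rsum_zero.
  rewrite IHn. rewrite <- rsum_plus. reflexivity. Qed.

Definition G (a b : R) : R := if Req_EM_T a 0 then 0 else a * ln (a / b).

Lemma ln2_pos : 0 < ln 2.
Proof. assert (H := ln_lt_2). lra. Qed.

Lemma term_eq p q P :
  (if Req_EM_T (p * q) 0 then 0 else p * q * log2 (q / P)) = G (p * q) (p * P) / ln 2.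
Proof. unfold G, log2. assert (H2 := ln2_pos).
  destruct (Req_EM_T (p*q) 0). field. lra.
  assert (p <> 0) by (intro; subst; apply n; ring).
  replace (p * q / (p * P)) with (q / P). field. lra.
  unfold Rdiv. rewrite Rinv_mult.
  replace (p * q * (/ p * / P)) with ((p * / p) * (q * / P)) by ring.
  rewrite Rinv_r; auto. ring. Qed.

Lemma G_scal l a b : 0 <= l -> l * G a b = G (l * a) (l * b).
Proof. intros Hl. unfold G.
  destruct (Req_EM_T a 0); destruct (Req_EM_T (l*a) 0).
  ring. exfalso; apply n; subst; ring. 
  assert (l = 0) by (destruct (Rmult_integral _ _ e); auto; contradiction). subst. ring.
  assert (l <> 0) by (intro; subst; apply n0; ring).
  replace (l * a / (l * b)) with (a / b). ring.
  unfold Rdiv. rewrite Rinv_mult.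
  replace (l * a * (/ l * / b)) with ((l * / l) * (a * / b)) by ring.
  rewrite Rinv_r; auto. ring. Qed.

Lemma ln_le t : 0 < t -> ln t <= t - 1.
Proof. intros. assert (H1 := exp_ineq1_le (ln t)). rewrite exp_ln in H1; auto. lra. Qed.

Lemma tangent a b s : 0 <= a -> 0 <= b -> (0 < a -> 0 < b) -> 0 < s ->
  a * ln s + a - b * s <= G a b.
Proof. intros Ha Hb Hab Hs. unfold G. destruct (Req_EM_T a 0).
  subst. nra.
  assert (Ha' : 0 < a) by lra. assert (Hb' := Hab Ha').
  assert (Hl := ln_le (b * s / a) ltac:(apply Rdiv_lt_0_compat; nra)).
  unfold Rdiv in *. rewrite ln_mult in * by (try apply Rinv_0_lt_compat; nra).
  rewrite ln_mult in Hl by nra. rewrite ln_Rinv in * by lra.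
  assert (a * (b * s * / a) = b * s) by (field; lra).
  nra. Qed.

Lemma rsum_lin3 M (a b : nat -> R) L s : rsum M (fun k => a k * L + a k - b k * s) = rsum M a * L + rsum M a - rsum M b * s.
Proof. induction M; simpl. ring. rewrite IHM. ring. Qed.

Lemma logsum M a b : (forall k, (k < M)%nat -> 0 <= a k /\ 0 <= b k /\ (0 < a k -> 0 < b k)) ->
  G (rsum M a) (rsum M b) <= rsum M (fun k => G (a k) (b k)).
Proof. intros H.
  assert (HA : 0 <= rsum M a) by (apply rsum_nonneg; intros; apply H; auto).
  destruct (Req_EM_T (rsum M a) 0) as [e|ne].
  - unfold G at 1. destruct (Req_EM_T (rsum M a) 0); [|contradiction].
    rewrite (rsum_ext M _ (fun _ => 0)). rewrite rsum_zero; lra.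
    intros i Hi. assert (a i <= rsum M a) by (apply rsum_ge_term; auto; intros; apply H; auto).
    assert (a i = 0) by (destruct (H i Hi) as [? _]; lra).
    unfold G; destruct (Req_EM_T (a i) 0); [auto| contradiction].
  - assert (HA' : 0 < rsum M a) by lra.
    destruct (rsum_pos_ex _ _ HA') as [k [Hk Hak]].
    assert (HB : 0 < rsum M b).
    { destruct (H k Hk) as [_ [_ Hbk]]. apply Rlt_le_trans with (b k). auto.
      apply rsum_ge_term; auto. intros; apply H; auto. }
    set (s := rsum M a / rsum M b).
    assert (Hs : 0 < s) by (apply Rdiv_lt_0_compat; auto).
    apply Rle_trans with (rsum M (fun k => a k * ln s + a k - b k * s)).
    + assert (E : rsum M (fun k => a k * ln s + a k - b k * s) = rsum M a * ln s + rsum M a - rsum M b * s).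
      { apply rsum_lin3. }
      rewrite E. unfold G. destruct (Req_EM_T (rsum M a) 0); [contradiction|].
      fold s. assert (rsum M b * s = rsum M a) by (unfold s; field; lra). lra.
    + apply rsum_le. intros i Hi. destruct (H i Hi) as [? [? ?]]. apply tangent; auto.
Qed.

Lemma mi_mix m K p M lam Qk c :
  prob_dist m p -> (forall k, (k < M)%nat -> 0 <= lam k) -> rsum M lam = 1 ->
  (forall k x y, (k < M)%nat -> (x < m)%nat -> (y < K)%nat -> 0 <= Qk k x y) ->
  (forall k, (k < M)%nat -> mutual_info m K p (Qk k) <= c) ->
  mutual_info m K p (fun x y => rsum M (fun k => lam k * Qk k x y)) <= c.
Proof.
  intros [Hp _] Hl Hl1 HQ HI. unfold mutual_info. cbv zeta.
  assert (H2 := ln2_pos).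
  set (Tk := fun k x y => if Req_EM_T (p x * Qk k x y) 0 then 0 else
     p x * Qk k x y * log2 (Qk k x y / rsum m (fun x' => p x' * Qk k x' y))).
  apply Rle_trans with (rsum m (fun x => rsum K (fun y => rsum M (fun k => lam k * Tk k x y)))).
  - apply rsum_le; intros x Hx. apply rsum_le; intros y Hy.
    rewrite term_eq.
    set (P := fun k => rsum m (fun x' => p x' * Qk k x' y)).
    rewrite (rsum_ext M (fun k => lam k * Tk k x y) (fun k => G (p x * (lam k * Qk k x y)) (p x * (lam k * P k)) / ln 2)).
    2:{ intros k Hk. unfold Tk. rewrite term_eq. fold (P k). unfold Rdiv.
        rewrite <- Rmult_assoc. rewrite G_scal by auto. f_equal. f_equal; ring. }
    unfold Rdiv. rewrite <- rsum_scal_r. apply Rmult_le_compat_r. left; apply Rinv_0_lt_compat; auto.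
    rewrite rsum_scal_l.
    replace (p x * rsum m (fun x' => p x' * rsum M (fun k => lam k * Qk k x' y)))
      with (rsum M (fun k => p x * (lam k * P k))).
    2:{ rewrite (rsum_ext m (fun x' => p x' * rsum M (fun k => lam k * Qk k x' y))
                          (fun x' => rsum M (fun k => lam k * (p x' * Qk k x' y)))).
        2:{ intros x' _. rewrite rsum_scal_l. apply rsum_ext; intros; ring. }
        rewrite rsum_swap. rewrite rsum_scal_l. apply rsum_ext; intros k _.
        unfold P. rewrite rsum_scal_l. reflexivity. }
    apply logsum. intros k Hk.
    assert (HPk : 0 <= P k) by (apply rsum_nonneg; intros; apply Rmult_le_pos; auto).
    assert (Hpx := Hp x Hx). assert (Hlk := Hl k Hk). assert (HQk := HQ k x y Hk Hx Hy).
    split; [|split].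
    + apply Rmult_le_pos; auto. apply Rmult_le_pos; auto.
    + apply Rmult_le_pos; auto. apply Rmult_le_pos; auto.
    + intros Hpos.
      assert (p x <> 0) by (intro E; rewrite E in Hpos; lra).
      assert (lam k <> 0) by (intro E; rewrite E in Hpos; lra).
      assert (Qk k x y <> 0) by (intro E; rewrite E in Hpos; lra).
      assert (p x * Qk k x y <= P k).
      { unfold P. apply (rsum_ge_term m (fun x' => p x' * Qk k x' y) x); auto.
        intros; apply Rmult_le_pos; auto. }
      assert (0 < p x * Qk k x y) by (apply Rmult_lt_0_compat; lra).
      apply Rmult_lt_0_compat; [lra|]. apply Rmult_lt_0_compat; lra.
  - rewrite (rsum_ext m _ (fun x => rsum M (fun k => rsum K (fun y => lam k * Tk k x y)))).
    2:{ intros; apply rsum_swap. }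
    rewrite rsum_swap.
    apply Rle_trans with (rsum M (fun k => lam k * c)).
    + apply rsum_le; intros k Hk.
      rewrite (rsum_ext m _ (fun x => lam k * rsum K (fun y => Tk k x y))).
      2:{ intros; rewrite rsum_scal_l; auto. }
      rewrite <- rsum_scal_l. apply Rmult_le_compat_l; auto.
      apply (HI k Hk).
    + rewrite <- rsum_scal_r. rewrite Hl1. lra.
Qed.

Lemma rsum_unit n f : rsum (S n) (fun j => unit_eff j * f j) = f 0%nat.
Proof. induction n. simpl. ring. change (rsum (S (S n)) (fun j => unit_eff j * f j)) with
  (rsum (S n) (fun j => unit_eff j * f j) + unit_eff (S n) * f (S n)). rewrite IHn. simpl. ring. Qed.

Definition eB (nB : nat) (E : mat) (b : vec) : vec := fun i => rsum (S nB) (fun j => E i j * b j).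

Lemma dot2_tensor nA nB E w b : dot2 nA nB E (tensor w b) = dot nA (eB nB E b) w.
Proof. unfold dot2, dot, eB, tensor. apply rsum_ext; intros i _.
  rewrite rsum_scal_r. apply rsum_ext; intros; ring. Qed.

Lemma dot2_mix nA nB E T M lam (a b : nat -> vec) :
  dot2 nA nB E (applyA nA T (fun i j => rsum M (fun k => lam k * a k i * b k j))) =
  rsum M (fun k => lam k * dot nA (eB nB E (b k)) (apply1 nA T (a k))).
Proof.
  unfold dot2, dot, eB, applyA, apply1.
  transitivity (rsum (S nA) (fun i => rsum M (fun k => rsum (S nB) (fun j => rsum (S nA) (fun l =>
      lam k * (E i j * b k j) * (T i l * a k l)))))).
  - apply rsum_ext; intros i _.
    rewrite <- rsum_swap. apply rsum_ext; intros j _.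
    rewrite rsum_scal_l.
    rewrite (rsum_ext (S nA) _ (fun l => rsum M (fun k => E i j * (T i l * (lam k * a k l * b k j))))).
    2:{ intros l _. rewrite rsum_scal_l. rewrite rsum_scal_l. reflexivity. }
    rewrite rsum_swap. apply rsum_ext; intros k _. apply rsum_ext; intros; ring.
  - rewrite rsum_swap. apply rsum_ext; intros k _.
    rewrite rsum_scal_l. apply rsum_ext; intros i _.
    rewrite rsum_scal_r. rewrite rsum_scal_l. apply rsum_ext; intros j _.
    rewrite rsum_scal_l. rewrite rsum_scal_l. apply rsum_ext; intros; ring.
Qed.

Theorem proposition4 (nA nB : nat) (OmA OmB : vec -> Prop)
    (HA : gpt_state_space nA OmA) (HB : gpt_state_space nB OmB)
    (Tset : mat -> Prop)
    (HT : forall T, Tset T -> allowed_local nA nB OmA (min_tensor OmA OmB) T) :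
  forall c : R,
    is_upper_bound (classical_values nA OmA) c ->
    is_upper_bound (dc_values nA nB OmA (min_tensor OmA OmB) Tset) c.
Proof.
  intros c Hc v [phi [Hphi [m [p [T [K [E [Hp [HTx [HE [Hsum Hv]]]]]]]]]]].
  destruct Hphi as [M [lam [a [b [Hk [Hl1 Hphi]]]]]].
  subst v phi.
  assert (Hb0 : forall k, (k < M)%nat -> b k 0%nat = 1).
  { intros k Hkk. destruct (Hk k Hkk) as [_ [_ Hbk]].
    destruct HB as [Rs [_ [_ [_ [_ Heq]]]]]. apply Heq in Hbk.
    destruct Hbk as [r [_ ->]]. reflexivity. }
  assert (Heff : forall k y, (k < M)%nat -> (y < K)%nat -> effect nA OmA (eB nB (E y) (b k))).
  { intros k y Hkk Hy. destruct (HE y Hy) as [Hsupp Hev]. split.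
    - intros i Hi. unfold eB. rewrite (rsum_ext _ _ (fun _ => 0)). apply rsum_zero.
      intros j _. rewrite Hsupp by auto. ring.
    - intros w Hw. rewrite <- dot2_tensor. apply Hev.
      exists 1%nat, (fun _ => 1), (fun _ => w), (fun _ => b k). split; [|split].
      + intros k' Hk'. split; [lra|]. split; auto. apply (Hk k Hkk).
      + simpl; ring.
      + unfold tensor. apply functional_extensionality; intro i.
        apply functional_extensionality; intro j. simpl; ring. }
  rewrite (functional_extensionality _ (fun x => fun y => rsum M (fun k => lam k *
       dot nA (eB nB (E y) (b k)) (apply1 nA (T x) (a k))))).
  2:{ intro x. apply functional_extensionality; intro y. apply dot2_mix. }
  apply mi_mix.
  - auto.
  - intros k Hkk; apply (Hk k Hkk).
  - auto.
  - intros k x y Hkk Hx Hy. apply (Heff k y Hkk Hy).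
    destruct (HTx x Hx) as [_ [_ [HTA _]]]. apply HTA. apply (Hk k Hkk).
  - intros k Hkk. apply Hc.
    exists m, p, (fun x => apply1 nA (T x) (a k)), K, (fun y => eB nB (E y) (b k)).
    split; [auto|split; [|split; [|split]]].
    + intros x Hx. destruct (HTx x Hx) as [_ [_ [HTA _]]]. apply HTA. apply (Hk k Hkk).
    + intros y Hy. apply Heff; auto.
    + intros i. unfold eB.
      rewrite rsum_swap.
      rewrite (rsum_ext _ _ (fun j => unit_eff i * (unit_eff j * b k j))).
      2:{ intros j _. rewrite <- rsum_scal_r. rewrite Hsum. unfold tensor. ring. }
      rewrite <- rsum_scal_l. rewrite rsum_unit. rewrite Hb0 by auto. ring.
    + reflexivity.
Qed.
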